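(* Let $\mathfrak a$ be a skew-symmetric invariant $n$-ary algebra which is irreducible but not simple, and let $\mathfrak i$ be a maximal non-trivial ideal of $\mathfrak a$ of codimension $1$. Then $\mathfrak a$ is isomorphic to a certain double extension (generalized double extension of some $\mathfrak g$ by some one-dimensional $\mathfrak h$ via $\psi_1,\dots,\psi_{n+1}$) with $\nu=0$ and $\psi_i=0$ for all $i\neq1$.
   Context: A skew-symmetric invariant $n$-ary algebra is a commutative invariant $n$-ary superalgebra whose underlying superspace is purely odd; concretely, a finite-dimensional vector space over $\mathbb K=\mathbb R$ or $\mathbb C$ with a non-degenerate symmetric bilinear form $(\,,)$ and a skew-symmetric $n$-linear map $\{\,\}$ satisfying $(a_0,\{a_1,\dots,a_n\})=-(a_1,\{a_0,a_2,\dots,a_n\})$. (In general: a commutative $n$-ary superalgebra satisfies $\{\dots,a_i,a_{i+1},\dots\}=(-1)^{\bar a_i\bar a_{i+1}}\{\dots,a_{i+1},a_i,\dots\}$, and invariance with respect to an even super-skew-symmetric form, $(a,b)=-(-1)^{\bar a\bar b}(b,a)$, means $(a_0,\{a_1,\dots,a_n\})=(-1)^{\bar a_0\bar a_1}(a_1,\{a_0,a_2,\dots,a_n\})$.) Ideal: subspace $\mathfrak i$ with $\{\mathfrak a,\dots,\mathfrak a,\mathfrak i\}\subset\mathfrak i$. Simple: not trivial one-dimensional and no proper ideals. Irreducible: not a direct sum of two ideals on which the form is non-degenerate. Derived potential: $S^*V$ (super-symmetric algebra of a superspace $V$ with such a form) carries the Poisson bracket with $[x,y]=(x,y)$ on $V$,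 $[v,w_1w_2]=[v,w_1]w_2+(-1)^{\bar v\bar w_1}w_1[v,w_2]$, $[v,w]=-(-1)^{\bar v\bar w}[w,v]$; every commutative invariant $n$-ary superalgebra on $V$ is $\{a_1,\dots,a_n\}=[a_1,[\dots,[a_n,\mu]\dots]]$ for some $\mu\in S^{n+1}V$ (its derived potential). Generalized double extension: given a commutative invariant $n$-ary superalgebra $\mathfrak g$ with derived potential $\mu\in S^{n+1}\mathfrak g$ and a commutative $n$-ary superalgebra $\mathfrak h$ with multiplication $\nu\in S^n\mathfrak h^*\otimes\mathfrak h\cong S^n\mathfrak h^*\cdot\mathfrak h\subset S^*(\mathfrak h\oplus\mathfrak h^* )$, where $\mathfrak h\oplus\mathfrak h^*$ has the form with $\mathfrak h,\mathfrak h^*$ isotropic, $(\alpha,x)=\alpha(x)$, $(x,\alpha)=-(-1)^{\bar\alpha\bar x}\alpha(x)$, the commutative invariant $n$-ary superalgebra on $\mathfrak d=\mathfrak g\oplus\mathfrak h\oplus\mathfrak h^*$ (orthogonal sum of forms) with derived potential $\mu+\nu+\sum_{i=1}^{n+1}\psi_i$, $\psi_i\in S^i\mathfrak h^*\cdot S^{n-i+1}\mathfrak g$, is the generalized double extension of $\mathfrak g$ by $\mathfrak h$ via the $\psi_i$; it is called a double extension if $\psi_n=\psi_{n+1}=0$. *)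

(* Defs.v *)
From HB Require Import structures.
From mathcomp Require Import all_boot all_order all_algebra.
From mathcomp Require Import reals complex.
Set Implicit Arguments. Unset Strict Implicit. Unset Printing Implicit Defensive.
Import GRing.Theory.
Local Open Scope ring_scope.

Section NaryDefs.
Variables (K : fieldType) (n : nat).

Definition upd (V : Type) (f : 'I_n -> V) (i : 'I_n) (x : V) : 'I_n -> V :=
  fun j => if j == i then x else f j.

Definition swap (V : Type) (f : 'I_n -> V) (i j : 'I_n) : 'I_n -> V :=
  fun k => if k == i then f j else if k == j then f i else f k.

Definition multilinear (V W : lmodType K) (m : ('I_n -> V) -> W) :=
  forall f (i : 'I_n) (c : K) x y,
    m (upd f i (c *: x + y)) = c *: m (upd f i x) + m (upd f i y).

Definition skew (V W : lmodType K) (m : ('I_n -> V) -> W) :=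
  forall f (i j : 'I_n), i != j -> m (swap f i j) = - m f.

Definition sym_bilinear (V : lmodType K) (b : V -> V -> K) :=
  (forall x y, b x y = b y x) /\
  (forall x (c : K) y z, b x (c *: y + z) = c * b x y + b x z).

Definition nondegenerate (V : lmodType K) (b : V -> V -> K) :=
  forall x, (forall y, b x y = 0) -> x = 0.

Record nalg := NAlg {
  ncar : vectType K;
  nform : ncar -> ncar -> K;
  nbr : ('I_n -> ncar) -> ncar }.
Arguments ncar : clear implicits.
Arguments nform : clear implicits.
Arguments nbr : clear implicits.

Definition skew_inv_nalg (A : nalg) :=
  [/\ sym_bilinear (nform A), nondegenerate (nform A),
      multilinear (nbr A), skew (nbr A) &
      forall (f : 'I_n -> ncar A) (i : 'I_n) (a : ncar A),
        nform A a (nbr A f) = - nform A (f i) (nbr A (upd f i a))].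

Definition is_ideal (A : nalg) (I : {vspace ncar A}) :=
  forall (f : 'I_n -> ncar A) (i : 'I_n), f i \in I -> nbr A f \in I.

Definition proper_ideal (A : nalg) (I : {vspace ncar A}) :=
  [/\ is_ideal I, I != 0%VS & I != fullv].

Definition trivial_one_dim (A : nalg) :=
  \dim (fullv : {vspace ncar A}) = 1%N /\ forall f, nbr A f = 0.

Definition simple (A : nalg) :=
  ~ trivial_one_dim A /\ forall I : {vspace ncar A}, ~ proper_ideal I.

Definition nondeg_on (A : nalg) (I : {vspace ncar A}) :=
  forall x, x \in I -> (forall y, y \in I -> nform A x y = 0) -> x = 0.

Definition irreducible (A : nalg) :=
  ~ exists I J : {vspace ncar A},
      [/\ is_ideal I /\ is_ideal J, I != 0%VS /\ J != 0%VS,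
          directv (I + J), (I + J)%VS = fullv & nondeg_on I /\ nondeg_on J].

Definition maximal_ideal (A : nalg) (I : {vspace ncar A}) :=
  proper_ideal I /\
  forall J : {vspace ncar A}, proper_ideal J -> (I <= J)%VS -> J = I.

(* ---------- the double extension d = g (+) h (+) h^*, h = K e one-dim. odd ----
   An element of d is (a, (s, t)) = a + s e + t e^*, a in g.
   Form: orthogonal sum, h and h^* isotropic, (e, e^* ) = (e^*, e) = 1. *)
Definition dspace (G : vectType K) := (G * (K^o * K^o))%type.

Definition dext_form (G : vectType K) (bg : G -> G -> K) (x y : dspace G) : K :=
  bg x.1 y.1 + x.2.1 * y.2.2 + x.2.2 * y.2.1.

(* The derived potential mu + psi_1 (nu = 0, psi_i = 0 for i <> 1), written as
   the totally skew (n+1)-form  (x0, {x1,...,xn}) on d, through the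
   identification of S^{n+1} of a purely odd space with alternating forms via
   the invariant form.  mu corresponds to (a0, {a1..an}_g); psi_1 = e^* . phi,
   phi in S^n g, corresponds to the form eps /\ phi, eps = e-coefficient,
   i.e. sum_i (-1)^i s_i phi(a_0,..,^a_i,..,a_n), which by skewness of phi is
   s_0 phi(a_1..a_n) - sum_{i>=1} s_i phi(a_1,..,a_0 (at i),..,a_n). *)
Definition dext_pot (G : vectType K) (bg : G -> G -> K) (brg : ('I_n -> G) -> G)
    (phi : ('I_n -> G) -> K^o) (x0 : dspace G) (f : 'I_n -> dspace G) : K :=
  let a := fun i => (f i).1 in
  let s := fun i => (f i).2.1 in
  bg x0.1 (brg a) + x0.2.1 * phi a - \sum_(i < n) s i * phi (upd a i x0.1).

(* T : A -> d is an isomorphism of invariant n-ary algebras onto the algebra on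
   d whose bracket is determined (via the nondegenerate form) by dext_pot *)
Definition dext_iso (A : nalg) (G : vectType K) (bg : G -> G -> K)
    (brg : ('I_n -> G) -> G) (phi : ('I_n -> G) -> K^o) (T : ncar A -> dspace G) :=
  [/\ forall (c : K) x y, T (c *: x + y) = c *: T x + T y,
      bijective T,
      forall x y, dext_form bg (T x) (T y) = nform A x y &
      forall x0 (f : 'I_n -> ncar A),
        dext_form bg (T x0) (T (nbr A f)) = dext_pot bg brg phi (T x0) (T \o f)].

Definition corollary2_for :=
  forall (A : nalg) (I : {vspace ncar A}),
    (2 <= n)%N -> skew_inv_nalg A -> irreducible A -> ~ simple A ->
    maximal_ideal I -> (\dim I).+1 = \dim (fullv : {vspace ncar A}) ->
    exists (G : vectType K) (bg : G -> G -> K) (brg : ('I_n -> G) -> G)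
           (phi : ('I_n -> G) -> K^o),
      [/\ skew_inv_nalg (@NAlg G bg brg), multilinear phi, skew phi &
          exists T : ncar A -> dspace G, dext_iso bg brg phi T].

End NaryDefs.

(* Main.v *)
Require Import Defs.
From HB Require Import structures.
From mathcomp Require Import all_boot all_order all_algebra.
From mathcomp Require Import reals complex.
From mathcomp Require Import ring zify.
From Stdlib Require Import Classical FunctionalExtensionality.
Import GRing.Theory Num.Theory.
Set Implicit Arguments. Unset Strict Implicit. Unset Printing Implicit Defensive.
Local Open Scope ring_scope.
Lemma lfunE' (K : fieldType) (aT rT : vectType K) (f : aT -> rT)
  (Hf : forall c x y, f (c *: x + y) = c *: f x + f y) x : linfun f x = f x.
Proof.
pose fL : {linear aT -> rT} := HB.pack f (GRing.isLinear.Build K aT rT *:%R f Hf).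
exact: (lfunE fL x).
Qed.

Section Main.
Variables (K : numFieldType) (n : nat) (A : nalg K n).
Local Notation V := (ncar A).
Local Notation form := (@nform _ _ A).
Local Notation br := (@nbr _ _ A).
Hypothesis HA : skew_inv_nalg A.

Lemma formC x y : form x y = form y x.
Proof. by case: HA => [[]]. Qed.
Lemma formDZr x c y z : form x (c *: y + z) = c * form x y + form x z.
Proof. by case: HA => [[]]. Qed.
Lemma form0r x : form x 0 = 0.
Proof.
have := formDZr x 1 0 0; rewrite scale1r !addr0 mul1r => h.
by apply: (@addrI _ (form x 0)); rewrite addr0 -h.
Qed.
Lemma formDr x y z : form x (y + z) = form x y + form x z.
Proof. by have := formDZr x 1 y z; rewrite scale1r mul1r. Qed.
Lemma formZr x c y : form x (c *: y) = c * form x y.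
Proof. by have := formDZr x c y 0; rewrite !addr0 form0r addr0. Qed.
Lemma formNr x y : form x (- y) = - form x y.
Proof. by rewrite -scaleN1r formZr mulN1r. Qed.
Lemma formBr x y z : form x (y - z) = form x y - form x z.
Proof. by rewrite formDr formNr. Qed.
Lemma formDl x y z : form (y + z) x = form y x + form z x.
Proof. by rewrite !(formC _ x) formDr. Qed.
Lemma formZl x c y : form (c *: y) x = c * form y x.
Proof. by rewrite !(formC _ x) formZr. Qed.
Lemma formNl x y : form (- y) x = - form y x.
Proof. by rewrite !(formC _ x) formNr. Qed.
Lemma formBl x y z : form (y - z) x = form y x - form z x.
Proof. by rewrite !(formC _ x) formBr. Qed.
Lemma form0l x : form 0 x = 0.
Proof. by rewrite formC form0r. Qed.

Lemma nondeg x : (forall y, form x y = 0) -> x = 0.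
Proof. by case: HA => _ H _ _ _; apply: H. Qed.

Lemma brDZ f i c x y : br (upd f i (c *: x + y)) = c *: br (upd f i x) + br (upd f i y).
Proof. by case: HA => _ _ H _ _; apply: H. Qed.
Lemma br_upd0 f i : br (upd f i 0) = 0.
Proof.
have := brDZ f i 1 0 0; rewrite scale1r !addr0 scale1r => h.
by apply: (@addrI _ (br (upd f i 0))); rewrite addr0 -h.
Qed.
Lemma brD f i x y : br (upd f i (x + y)) = br (upd f i x) + br (upd f i y).
Proof. by have := brDZ f i 1 x y; rewrite !scale1r. Qed.
Lemma brZ f i c x : br (upd f i (c *: x)) = c *: br (upd f i x).
Proof. by have := brDZ f i c x 0; rewrite !addr0 br_upd0 addr0. Qed.
Lemma brN f i x : br (upd f i (- x)) = - br (upd f i x).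
Proof. by rewrite -scaleN1r brZ scaleN1r. Qed.
Lemma brB f i x y : br (upd f i (x - y)) = br (upd f i x) - br (upd f i y).
Proof. by rewrite brD brN. Qed.

Lemma brinv f i a : form a (br f) = - form (f i) (br (upd f i a)).
Proof. by case: HA => _ _ _ _ H; apply: H. Qed.

Lemma upd_id (T : Type) (f : 'I_n -> T) i : upd f i (f i) = f.
Proof. by apply: functional_extensionality => j; rewrite /upd; case: eqP => // ->. Qed.
Lemma upd_upd (T : Type) (f : 'I_n -> T) i x y : upd (upd f i x) i y = upd f i y.
Proof. by apply: functional_extensionality => j; rewrite /upd; case: eqP. Qed.
Lemma upd_eq (T : Type) (f : 'I_n -> T) i x : upd f i x i = x.
Proof. by rewrite /upd eqxx. Qed.
Lemma upd_neq (T : Type) (f : 'I_n -> T) i j x : j != i -> upd f i x j = f j.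
Proof. by rewrite /upd => /negbTE ->. Qed.

Lemma vec_eq0 (v : V) : v = - v -> v = 0.
Proof.
move=> h; apply/eqP; have : (2%:R : K) *: v == 0.
  by rewrite scaler_nat mulr2n {2}h subrr.
by rewrite scaler_eq0 pnatr_eq0 orFb.
Qed.
Lemma sc_eq0 (v : K) : v = - v -> v = 0.
Proof.
move=> h; apply/eqP; have : v *+ 2 == 0 by rewrite mulr2n {2}h subrr.
by rewrite mulrn_eq0.
Qed.

Lemma br_eq0 f i j : i != j -> f i = f j -> br f = 0.
Proof.
move=> ij fij; apply: vec_eq0.
have E : swap f i j = f.
  apply: functional_extensionality => k; rewrite /swap.
  by case: eqP => [->|_] //; case: eqP => [->|_].
by rewrite -{1}E; case: HA => _ _ _ Hs _; apply: Hs.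
Qed.


Lemma form_sum x m (G : 'I_m -> V) : form x (\sum_(i < m) G i) = \sum_(i < m) form x (G i).
Proof.
elim/big_rec2: _ => [|i y1 y2 _ IH]; first by rewrite form0r.
by rewrite formDr IH.
Qed.

Variable I : {vspace V}.
Hypothesis HI : is_ideal I.
Hypothesis HI0 : I != 0%VS.
Hypothesis HdimI : (\dim I).+1 = \dim (fullv : {vspace V}).
Hypothesis Hn2 : (2 <= n)%N.
Hypothesis Hirr : irreducible A.

Lemma decomp v : v \notin I -> forall x, exists2 p, p \in I & exists c, x = p + c *: v.
Proof.
move=> vI x.
have dis : (I :&: <[v]> = 0)%VS.
  apply/eqP; rewrite -subv0; apply/subvP => y /memv_capP [yI /vlineP [k yk]].
  rewrite memv0 yk; have [->|k0] := eqVneq k 0; first by rewrite scale0r.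
  exfalso; move/negP: vI; apply; rewrite -[v]scale1r -(mulVf k0) -scalerA -yk.
  exact: memvZ.
have v0 : v != 0 by apply: contraNneq vI => ->; rewrite mem0v.
have E : (I + <[v]> = fullv)%VS.
  apply/eqP; rewrite eqEdim subvf /= dimv_disjoint_sum // dim_vline v0 -HdimI.
  by rewrite addn1.
have : x \in (I + <[v]>)%VS by rewrite E memvf.
case/memv_addP => p pI [q /vlineP [c ->] ->].
by exists p => //; exists c.
Qed.

Lemma exists_es : exists2 es : V, es != 0 & forall y, y \in I -> form es y = 0.
Proof.
pose F (x : V) : 'rV[K]_(\dim I) := \row_j form x (vbasis I)`_j.
have Flin : forall c x y, F (c *: x + y) = c *: F x + F y.
  by move=> c x y; apply/rowP => j; rewrite !mxE formDl formZl.
pose L := linfun F.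
have : (0 < \dim (fullv :&: lker L))%N.
  have := limg_ker_dim L fullv.
  have : (\dim (L @: fullv) <= \dim I)%N.
    apply: leq_trans (dimvS (subvf _)) _; by rewrite dimvf dim_matrix; lia.
  rewrite -HdimI; lia.
rewrite lt0n dimv_eq0 -vpick0 => nz.
exists (vpick (fullv :&: lker L)) => // y yI.
have := memv_pick (fullv :&: lker L); case/memv_capP => _.
rewrite memv_ker lfunE' // => /eqP Fx.
rewrite (coord_vbasis yI) form_sum big1 // => j _.
rewrite formZr.
have := congr1 (fun M : 'rV[K]_(\dim I) => M 0 j) Fx; rewrite !mxE => ->.
by rewrite mulr0.
Qed.

Lemma cap_line v : v \notin I -> (I :&: <[v]> = 0)%VS.
Proof.
move=> vI; apply/eqP; rewrite -subv0; apply/subvP => y /memv_capP [yI /vlineP [k yk]].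
rewrite memv0 yk; have [->|k0] := eqVneq k 0; first by rewrite scale0r.
exfalso; move/negP: vI; apply; rewrite -[v]scale1r -(mulVf k0) -scalerA -yk.
exact: memvZ.
Qed.

Lemma sum_line v : v \notin I -> (I + <[v]> = fullv)%VS.
Proof.
move=> vI; have v0 : v != 0 by apply: contraNneq vI => ->; rewrite mem0v.
apply/eqP; rewrite eqEdim subvf /= dimv_disjoint_sum ?cap_line // dim_vline v0 -HdimI.
by rewrite addn1.
Qed.

Lemma es_in_I es : es != 0 -> (forall y, y \in I -> form es y = 0) -> es \in I.
Proof.
move=> es0 esI; apply/negPn/negP => nI.
have Dx := decomp nI.
have ort : forall y, y \in I -> form y es = 0 by move=> y yI; rewrite formC esI.
have ndI : forall x, x \in I -> (forall y, y \in I -> form x y = 0) -> x = 0.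
  move=> x xI h; apply: nondeg => z; case: (Dx z) => p pI [c ->].
  by rewrite formDr formZr h // ort // mulr0 addr0.
have ees : form es es != 0.
  apply/eqP => h; apply: (negP es0); apply/eqP; apply: nondeg => z.
  by case: (Dx z) => p pI [c ->]; rewrite formDr formZr esI // h mulr0 addr0.
apply: Hirr; exists I, <[es]>%VS; split.
- split => // f i /vlineP [d fi].
  case: (Dx (br f)) => p pI [c Ebr].
  have p0 : p = 0.
    apply: ndI => // y yI.
    have : form y (br f) = 0.
      rewrite (brinv f i y) fi formZl esI ?mulr0 ?oppr0 //.
      by apply: (HI (i := i)); rewrite upd_eq.
    by rewrite Ebr formDr formZr ort // mulr0 addr0 formC.
  by rewrite Ebr p0 add0r memvZ // memv_line.
- by split => //; rewrite -dimv_eq0 dim_vline es0.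
- by apply/directv_addP; apply: cap_line.
- exact: sum_line.
- split; first exact: ndI.
  move=> x /vlineP [c ->] h; have := h es (memv_line es); rewrite formZl => /eqP.
  by rewrite mulf_eq0 (negbTE ees) orbF => /eqP ->; rewrite scale0r.
Qed.

Lemma exists_e es : es != 0 -> es \in I -> (forall y, y \in I -> form es y = 0) ->
  exists e, form es e = 1 /\ form e e = 0.
Proof.
move=> es0 esI ort.
have [y hy] : exists y, form es y != 0.
  apply: NNPP => h; apply: (negP es0); apply/eqP; apply: nondeg => y.
  by case: (eqVneq (form es y) 0) => // hy; exfalso; apply: h; exists y.
have [e0 e01] : exists e0, form es e0 = 1.
  by exists ((form es y)^-1 *: y); rewrite formZr mulVf.
have ee : form es es = 0 by apply: ort.
exists (e0 - (form e0 e0 / 2%:R) *: es); split.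
  by rewrite formBr formZr e01 ee mulr0 subr0.
rewrite formBl !formBr !formZl !formZr ee (formC e0 es) e01.
have h2 : (2%:R : K) != 0 by rewrite pnatr_eq0.
by field.
Qed.

Variables es e : V.
Hypothesis Hes : es \in I.
Hypothesis Hort : forall y, y \in I -> form es y = 0.
Hypothesis Hese : form es e = 1.
Hypothesis Hee : form e e = 0.

Lemma Hss : form es es = 0. Proof. exact: Hort. Qed.
Lemma Hees : form e es = 1. Proof. by rewrite formC. Qed.

Lemma eI : e \notin I.
Proof. by apply/negP => /Hort; rewrite Hese => /eqP; rewrite oner_eq0. Qed.

Lemma memI x : form es x = 0 -> x \in I.
Proof.
case: (decomp eI x) => p pI [c Ex].
have : form es x = c by rewrite Ex formDr formZr Hort // Hese mulr1 add0r.
by move=> -> c0; rewrite Ex c0 scale0r addr0.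
Qed.

Definition pi_def x := x - (form es x *: e + form e x *: es).
Definition pi x := locked (pi_def x).
Lemma piE x : pi x = x - (form es x *: e + form e x *: es).
Proof. by rewrite /pi -lock. Qed.

Lemma pi_e x : form e (pi x) = 0.
Proof. by rewrite !piE formBr formDr !formZr Hee Hees mulr0 mulr1 add0r subrr. Qed.
Lemma pi_es x : form es (pi x) = 0.
Proof. by rewrite !piE formBr formDr !formZr Hese Hss mulr0 mulr1 addr0 subrr. Qed.
Lemma pi_dec x : x = pi x + (form es x *: e + form e x *: es).
Proof. by rewrite !piE subrK. Qed.
Lemma pi_fix x : form e x = 0 -> form es x = 0 -> pi x = x.
Proof. by move=> h1 h2; rewrite !piE h1 h2 !scale0r addr0 subr0. Qed.
Lemma piK x : pi (pi x) = pi x.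
Proof. by rewrite pi_fix ?pi_e ?pi_es. Qed.
Lemma piI x : pi x \in I.
Proof. by apply: memI; rewrite pi_es. Qed.
Lemma pi_lin c x y : pi (c *: x + y) = c *: pi x + pi y.
Proof.
rewrite !piE formDr formZr formDr formZr !scalerDl -!scalerA.
rewrite scalerBr scalerDr !opprD !addrA; congr (_ + _).
rewrite -!addrA; congr (_ + _); rewrite addrC -!addrA; congr (_ + _).
by rewrite addrC -!addrA; congr (_ + _); rewrite addrC -!addrA; congr (_ + _).
Qed.
Lemma form_pi_r u x : form e u = 0 -> form es u = 0 -> form u (pi x) = form u x.
Proof.
move=> h1 h2; rewrite [in RHS](pi_dec x) formDr formDr !formZr.
by rewrite !(formC u) h1 h2 !mulr0 !addr0.
Qed.
Lemma form_dec x y :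
  form x y = form (pi x) (pi y) + (form es x * form e y + form e x * form es y).
Proof.
rewrite {1}(pi_dec x) {1}(pi_dec y) !(formDl, formDr, formZl, formZr).
rewrite (formC (pi x) e) (formC (pi x) es) !pi_e !pi_es Hee Hees Hese Hss.
ring.
Qed.

Lemma br_in_I f : br f \in I.
Proof.
have lt0 : (0 < n)%N by lia.
have lt1 : (1 < n)%N by lia.
pose i0 : 'I_n := Ordinal lt0; pose i1 : 'I_n := Ordinal lt1.
have i01 : i0 != i1 by [].
have [s0|s0] := eqVneq (form es (f i0)) 0.
  by apply: (HI (i := i0)); apply: memI.
pose c := form es (f i1) / form es (f i0).
have q1 : f i1 - c *: f i0 \in I.
  by apply: memI; rewrite formBr formZr /c divfK // subrr.
have -> : f = upd f i1 (c *: f i0 + (f i1 - c *: f i0)).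
  by rewrite addrC subrK upd_id.
rewrite brDZ (@br_eq0 (upd f i1 (f i0)) i0 i1) ?upd_eq ?upd_neq // scaler0 add0r.
by apply: (HI (i := i1)); rewrite upd_eq.
Qed.

Lemma form_es_br f : form es (br f) = 0.
Proof. exact/Hort/br_in_I. Qed.

Lemma Lz y g i : form y (br (upd g i es)) = 0.
Proof. by rewrite (brinv _ i y) upd_eq upd_upd form_es_br oppr0. Qed.

Lemma Le0 g i : form e (br (upd g i e)) = 0.
Proof.
apply: sc_eq0; rewrite {1}(brinv _ i e) upd_eq upd_upd //.
Qed.

Lemma Lye y g i : form y (br (upd g i e)) = - form e (br (upd g i y)).
Proof. by rewrite (brinv _ i y) upd_eq upd_upd. Qed.

Lemma Lsub y g i x :
  form y (br (upd g i x)) = form y (br (upd g i (pi x))) + form es x * form y (br (upd g i e)).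
Proof.
by rewrite {1}(pi_dec x) brD brD !brZ !formDr !formZr Lz mulr0 addr0.
Qed.

Definition gk (k : nat) (f : 'I_n -> V) := fun j : 'I_n => if (j < k)%N then pi (f j) else f j.

Lemma gk0 f : gk 0 f = f.
Proof. by apply: functional_extensionality => j; rewrite /gk ltn0. Qed.
Lemma gkn f : gk n f = pi \o f.
Proof. by apply: functional_extensionality => j; rewrite /gk ltn_ord. Qed.
Lemma gkS k f (lt : (k < n)%N) :
  gk k f = upd (gk k.+1 f) (Ordinal lt) (f (Ordinal lt)).
Proof.
apply: functional_extensionality => j; rewrite /gk /upd.
case: eqP => [->|/eqP ne]; first by rewrite /= ltnn.
rewrite [(j < k.+1)%N]ltnS [(j <= k)%N]leq_eqVlt.
have -> // : (nat_of_ord j == k) = false.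
by apply/negbTE; apply: contra ne => /eqP ejk; apply/eqP/val_inj.
Qed.
Lemma gkS' k f (lt : (k < n)%N) :
  upd (gk k.+1 f) (Ordinal lt) (pi (f (Ordinal lt))) = gk k.+1 f.
Proof.
apply: functional_extensionality => j; rewrite /gk /upd.
by case: eqP => [->|//]; rewrite /= ltnSn.
Qed.

Lemma LE_k f k : (k <= n)%N -> form e (br f) = form e (br (gk k f)).
Proof.
elim: k => [|k IH] lt; first by rewrite gk0.
by rewrite IH ?(ltnW lt) // (gkS f lt) Lsub Le0 mulr0 addr0 gkS'.
Qed.

Lemma LE f : form e (br f) = form e (br (pi \o f)).
Proof. by rewrite (LE_k f (leqnn n)) gkn. Qed.

Lemma LG_k y f k : (k <= n)%N ->
  form y (br f) = form y (br (gk k f)) -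
    \sum_(j < n | (j < k)%N) form es (f j) * form e (br (upd (pi \o f) j (pi y))).
Proof.
elim: k => [|k IH] lt.
  by rewrite gk0 big_pred0 ?subr0 // => j; rewrite ltn0.
rewrite IH ?(ltnW lt) // (gkS f lt) Lsub Lye LE.
have -> : pi \o upd (gk k.+1 f) (Ordinal lt) y = upd (pi \o f) (Ordinal lt) (pi y).
  apply: functional_extensionality => j; rewrite /= /upd /gk.
  by case: eqP => // _; case: ifP => // _; rewrite piK.
rewrite gkS' [in RHS](bigD1 (Ordinal lt)) /=; last exact: ltnSn.
rewrite opprD addrA mulrN; congr (_ - _).
apply: eq_bigl => j.
case: (eqVneq j (Ordinal lt)) => [->|ne]; first by rewrite andbF /= ltnn.
rewrite andbT [(j < k.+1)%N]ltnS [(j <= k)%N]leq_eqVlt; have -> // : (nat_of_ord j == k) = false.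
by apply/negbTE; apply: contra ne => /eqP ejk; apply/eqP/val_inj.
Qed.

Lemma LG y f :
  form y (br f) = form y (br (pi \o f)) -
    \sum_(j < n) form es (f j) * form e (br (upd (pi \o f) j (pi y))).
Proof.
rewrite (LG_k y f (leqnn n)) gkn; congr (_ - _).
by apply: eq_bigl => j; rewrite ltn_ord.
Qed.

Lemma pi0 : pi 0 = 0.
Proof. by rewrite piE !form0r !scale0r addr0 subr0. Qed.
Lemma piN v : pi (- v) = - pi v.
Proof. by have := pi_lin (-1) v 0; rewrite !scaleN1r addr0 pi0 addr0 => ->. Qed.

Definition U : {vspace V} := limg (linfun pi).
Lemma memU x : pi x \in U.
Proof. by rewrite /U -(lfunE' pi_lin) memv_img // memvf. Qed.
Lemma U_prop u : u \in U -> form e u = 0 /\ form es u = 0.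
Proof. by case/memv_imgP => z _ ->; rewrite lfunE' ?pi_e ?pi_es //; apply: pi_lin. Qed.

Local Notation G := (subvs_of U).
Definition bg (u v : G) : K := form (vsval u) (vsval v).
Definition brg (a : 'I_n -> G) : G := vsproj U (pi (br (vsval \o a))).
Definition phi (a : 'I_n -> G) : K^o := form e (br (vsval \o a)).
Definition T (x : V) : dspace G := (vsproj U (pi x), (form es x, form e x)).

Lemma vsval_proj x : vsval (vsproj U (pi x)) = pi x.
Proof. exact: vsprojK (memU x). Qed.
Lemma ge (u : G) : form e (vsval u) = 0.
Proof. by case: (U_prop (subvsP u)). Qed.
Lemma ges (u : G) : form es (vsval u) = 0.
Proof. by case: (U_prop (subvsP u)). Qed.
Lemma comp_upd (a : 'I_n -> G) i u : vsval \o upd a i u = upd (vsval \o a) i (vsval u).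
Proof. by apply: functional_extensionality => j; rewrite /upd /=; case: eqP. Qed.
Lemma comp_swap (a : 'I_n -> G) i j : vsval \o swap a i j = swap (vsval \o a) i j.
Proof.
by apply: functional_extensionality => k; rewrite /swap /=; case: eqP => //; case: eqP.
Qed.
Lemma comp_T (f : 'I_n -> V) :
  vsval \o (fun i => vsproj U (pi (f i))) = pi \o f.
Proof. by apply: functional_extensionality => j; rewrite /= vsval_proj. Qed.

Lemma G_ok : skew_inv_nalg (@NAlg _ _ G bg brg).
Proof.
split => /=.
- split; first by move=> x y; apply: formC.
  by move=> x c y z; rewrite /bg linearP /= formDZr.
- move=> u h; apply: subvs_inj; rewrite linear0; apply: nondeg => y.
  rewrite (pi_dec y) formDr formDr !formZr (formC _ e) (formC _ es) ge ges !mulr0 !addr0.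
  by rewrite -vsval_proj; apply: h.
- by move=> f i c x y; rewrite /brg !comp_upd linearP brDZ pi_lin linearP.
- move=> f i j ij; rewrite /brg comp_swap.
  by case: HA => _ _ _ Hs _; rewrite Hs // piN linearN.
- move=> f i a; rewrite /bg /brg !vsval_proj form_pi_r ?ge ?ges //.
  by rewrite form_pi_r ?ge ?ges // comp_upd; apply: brinv.
Qed.

Lemma phi_ml : multilinear phi.
Proof. by move=> f i c x y; rewrite /phi !comp_upd linearP brDZ formDZr. Qed.
Lemma phi_skew : Defs.skew phi.
Proof.
move=> f i j ij; rewrite /phi comp_swap.
by case: HA => _ _ _ Hs _; rewrite Hs // formNr.
Qed.

Lemma Tiso x y : dext_form bg (T x) (T y) = form x y.
Proof. by rewrite /dext_form /T /= /bg !vsval_proj [in RHS]form_dec addrA. Qed.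

Lemma T_ok : dext_iso bg brg phi T.
Proof.
split.
- move=> c x y; rewrite /T pi_lin linearP !formDZr.
  by [].
- exists (fun p : dspace G => vsval p.1 + (p.2.1 *: e + p.2.2 *: es)).
    by move=> x; rewrite /T /= vsval_proj -pi_dec.
  move=> [u [s t]] /=.
  have hs : form es (vsval u + (s *: e + t *: es)) = s.
    by rewrite formDr formDr !formZr ges Hese Hss mulr1 mulr0 addr0 add0r.
  have ht : form e (vsval u + (s *: e + t *: es)) = t.
    by rewrite formDr formDr !formZr ge Hee Hees mulr1 mulr0 add0r add0r.
  by rewrite /T hs ht piE hs ht addrK vsvalK.
- exact: Tiso.
- move=> x0 f; rewrite Tiso /dext_pot /= /bg /brg /phi.
  rewrite comp_T !vsval_proj form_pi_r ?pi_e ?pi_es //.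
  under eq_bigr => i _ do rewrite comp_upd comp_T vsval_proj.
  rewrite (LG x0 f); congr (_ - _).
  by rewrite {1}(pi_dec x0) formDl formDl !formZl form_es_br mulr0 addr0.
Qed.

Lemma result : exists (G : vectType K) (bg : G -> G -> K) (brg : ('I_n -> G) -> G)
    (phi : ('I_n -> G) -> K^o),
  [/\ skew_inv_nalg (@NAlg _ _ G bg brg), multilinear phi, Defs.skew phi &
      exists T : V -> dspace G, dext_iso bg brg phi T].
Proof.
exists G, bg, brg, phi; split; [exact: G_ok | exact: phi_ml | exact: phi_skew |].
by exists T; exact: T_ok.
Qed.
End Main.

Lemma cor_gen (K : numFieldType) (n : nat) : corollary2_for K n.
Proof.
move=> A I Hn2 HA Hirr _ [[HI HI0 _] _] HdimI.
have [es es0 esort] := exists_es HA HI0 HdimI Hn2.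
have esI := es_in_I HA HI HI0 HdimI Hirr es0 esort.
have [e [h1 h2]] := exists_e HA es0 esI esort.
exact: (result HA HI HI0 HdimI Hn2 esI esort h1 h2).
Qed.

Theorem corollary2 (R : realType) (n : nat) :
  corollary2_for R n /\ corollary2_for (R[i])%C n.
Proof. split; exact: cor_gen. Qed.
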